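(* Let $H$ be an infinite-dimensional real Hilbert space. Then for every integer $m\ge1$ and every $\alpha\in(0,1]$, $$\tfrac12 m^{-\alpha/2}\le \gamma^o_m(\alpha,H)\le m^{-\alpha/2}.$$
   Context: A (symmetric) dictionary in $H$ is a set $\mathcal D$ of unit vectors with dense span and $g\in\mathcal D\Rightarrow -g\in\mathcal D$. $A_1(\mathcal D)$ is the closed convex hull of $\mathcal D$ and $\|f\|_{A_1(\mathcal D)}:=\inf\{M:f/M\in A_1(\mathcal D)\}$. Orthogonal Greedy Algorithm (OGA): for $h\in H$ let $g(h)\in\mathcal D$ maximize $\langle h,g\rangle$ over $\mathcal D$ (assumed to exist); $f^o_0:=f$, $G^o_0:=0$, and for $m\ge1$, $G^o_m(f,\mathcal D)$ is the orthogonal projection of $f$ onto $\operatorname{span}\{g(f^o_0),\dots,g(f^o_{m-1})\}$ and $f^o_m:=f-G^o_m(f,\mathcal D)$. For $\alpha\in(0,1]$, $$\gamma^o_m(\alpha,H):=\sup\frac{\|f-G^o_m(f,\mathcal D)\|}{\|f\|^{1-\alpha}\|f\|_{A_1(\mathcal D)}^{\alpha}},$$ supremum over all dictionaries $\mathcal D$, all $f\ne0$ with $\|f\|_{A_1(\mathcal D)}<\infty$, and all possible realizations of the OGA. *)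

(* Defs.v *)
From HB Require Import structures.
From mathcomp Require Import all_boot all_order all_algebra.
From mathcomp Require Import all_classical all_reals all_analysis.
Set Implicit Arguments. Unset Strict Implicit. Unset Printing Implicit Defensive.
Import Order.TTheory GRing.Theory Num.Theory.
Import numFieldNormedType.Exports.
Local Open Scope classical_set_scope.
Local Open Scope ring_scope.

Section OGA.
Context {R : realType} {V : completeNormedModType R}.

(* ip is a real inner product whose induced norm is the norm of V;
   together with completeness of V this makes V a real Hilbert space. *)
Definition is_inner_product (ip : V -> V -> R) : Prop :=
  [/\ forall x y, ip x y = ip y x,
      forall a x y z, ip (a *: x + y) z = a * ip x z + ip y z
    & forall x, ip x x = `|x| ^+ 2].

Definition span_set (S : set V) : set V :=
  [set x | exists n (c : 'I_n -> R) (g : 'I_n -> V),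
     (forall i, S (g i)) /\ x = \sum_(i < n) c i *: g i].

Definition infinite_dim : Prop :=
  forall n (g : 'I_n -> V), exists x, ~ span_set (range g) x.

Definition dictionary (D : set V) : Prop :=
  [/\ forall g, D g -> `|g| = 1,
      closure (span_set D) = setT
    & forall g, D g -> D (- g)].

Definition conv_hull (D : set V) : set V :=
  [set x | exists n (c : 'I_n -> R) (g : 'I_n -> V),
     [/\ forall i, D (g i), forall i, 0 <= c i, \sum_(i < n) c i = 1
       & x = \sum_(i < n) c i *: g i]].

Definition A1 (D : set V) : set V := closure (conv_hull D).

(* ||f||_{A_1(D)} = inf {M > 0 : f / M \in A_1(D)}  (+oo if no such M) *)
Definition A1norm (D : set V) (f : V) : \bar R :=
  ereal_inf [set M%:E | M in [set M : R | 0 < M /\ A1 D (M^-1 *: f)]].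

Definition is_orth_proj (ip : V -> V -> R) (S : set V) (f p : V) : Prop :=
  S p /\ forall s, S s -> ip (f - p) s = 0.

(* a realization of the OGA for f and D: gs k = g(f^o_k) is a maximizer of
   <f^o_k, .> over D, and G k = G^o_k(f,D) is the orthogonal projection of f
   onto span {gs 0, ..., gs (k-1)}, f^o_k = f - G k. *)
Definition OGA_realization (ip : V -> V -> R) (D : set V) (f : V)
    (gs G : nat -> V) : Prop :=
  forall k,
    [/\ is_orth_proj ip (span_set [set gs i | i in [set i : nat | (i < k)%N]])
          f (G k),
        D (gs k)
      & forall g, D g -> ip (f - G k) g <= ip (f - G k) (gs k)].

Definition gamma_o (ip : V -> V -> R) (m : nat) (alpha : R) : \bar R :=
  ereal_sup [set r%:E | r in [set r : R | exists D f gs G,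
     [/\ dictionary D, f != 0, (A1norm D f < +oo)%E,
         OGA_realization ip D f gs G
       & r = `|f - G m| / (`|f| `^ (1 - alpha) * (fine (A1norm D f)) `^ alpha)]]].

End OGA.

(* Main.v *)
Set Warnings "-all".
Require Import Defs.
From HB Require Import structures.
From mathcomp Require Import all_boot all_order all_algebra.
From mathcomp Require Import all_classical all_reals all_analysis.
From mathcomp Require Import lra ring.
Import Order.TTheory GRing.Theory Num.Theory.
Import numFieldNormedType.Exports.
Local Open Scope ring_scope.

Lemma msq (R : realType) (m : R) (b : R) : 0 < m -> (m `^ (b/2)) ^+ 2 = m `^ b.
Proof.
move=> m0; rewrite -powR_mulrn; last exact: powR_ge0.
rewrite -powRrM; congr (_ `^ _).
by rewrite -mulrA mulVf ?mulr1 //.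
Qed.

Lemma final_ineq (R : realType) (x y A : R) (m : nat) alpha : (1<=m)%N -> 0<alpha<=1 ->
  0 <= x -> x ^+ 2 <= y ^+ 2 -> 0 < y -> 0 <= A -> m%:R * x^+2 <= A^+2 ->
  x / (y `^ (1-alpha) * A `^ alpha) <= m%:R `^ (-alpha/2).
Proof.
move=> m1 /andP[a0 a1] x0 xy y0 A0 xA.
have mp : 0 < m%:R :> R by rewrite ltr0n.
have [->|xp] := eqVneq x 0; first by rewrite mul0r powR_ge0.
have xp' : 0 < x by rewrite lt_def xp x0.
have xy' : x <= y by nra.
have u0 : 0 < m%:R `^ (1/2) :> R by exact: (powR_gt0 _ mp).
have u2 : (m%:R `^ (1/2)) ^+ 2 = m%:R :> R.
  rewrite (@msq R _ 1 mp). exact: (powRr1 (ltW mp)).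
have xuA : x * m%:R `^ (1/2) <= A.
  have : (x * m%:R `^ (1/2)) ^+ 2 <= A ^+ 2 by rewrite exprMn u2 mulrC.
  have : 0 <= x * m%:R `^ (1/2) by rewrite mulr_ge0 // ltW.
  move: (x * _) => z. nra.
have Ap : 0 < A by apply: lt_le_trans xuA; rewrite mulr_gt0.
have den0 : 0 < y `^ (1-alpha) * A `^ alpha.
  by rewrite mulr_gt0 //; apply: powR_gt0.
rewrite ler_pdivrMr // mulrC.
rewrite mulNr powRN.
have q0 : 0 < m%:R `^ (alpha / 2) :> R by exact: (powR_gt0 _ mp).
rewrite ler_pdivlMr //.
have -> : x = x `^ (1 - alpha) * x `^ alpha.
  rewrite -powRD; last by rewrite xp implybT.
  by rewrite subrK (powRr1 x0).
rewrite -mulrA; apply: ler_pM.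
- exact: powR_ge0.
- by rewrite mulr_ge0 // powR_ge0.
- by apply: ge0_ler_powR; rewrite ?nnegrE ?subr_ge0 // ltW.
have -> : m%:R `^ (alpha / 2) = (m%:R `^ (1/2)) `^ alpha :> R.
  by rewrite -powRrM mul1r mulrC.
rewrite -powRM; [|exact: ltW|exact: ltW].
apply: ge0_ler_powR; rewrite ?nnegrE; try exact: xuA; try exact: ltW.
by rewrite mulr_ge0 // ltW.
Qed.

Lemma lower_ineq (R : realType) (x y : R) (m : nat) alpha : (1<=m)%N -> 0 < alpha <= 1 ->
  0 <= x -> x ^+ 2 = (4 * m%:R)^-1 -> 0 <= y -> y ^+ 2 = (2 * m%:R)^-1 ->
  1 / 2 * m%:R `^ (- alpha / 2) <= x / (y `^ (1 - alpha) * 1 `^ alpha).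
Proof.
move=> m1 /andP[a0 a1] x0 x2 y0 y2.
have mp : 0 < m%:R :> R by rewrite ltr0n.
have mi : 0 < m%:R^-1 :> R by rewrite invr_gt0.
pose v := m%:R `^ ((-1) / 2) : R.
have v0 : 0 < v by exact: (powR_gt0 _ mp).
have v2 : v ^+ 2 = m%:R^-1 by rewrite /v (@msq R _ (-1) mp) (powR_inv1 (ltW mp)).
have yp : 0 < y.
  have : 0 < y ^+ 2 by rewrite y2 invr_gt0 mulr_gt0 // ltr0n.
  nra.
have yv : y <= v.
  move: y2; rewrite invfM => y2.
  have : 2%:R^-1 * m%:R^-1 <= m%:R^-1 :> R.
    by apply: ler_piMl; [exact: ltW | rewrite invf_le1 ?ltr0n // ler1n].
  nra.
have xv : v / 2 <= x.
  move: x2; rewrite invfM => x2.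
  have h4 : (4%:R^-1 : R) = 2%:R^-1 * 2%:R^-1 by rewrite -invfM -natrM.
  have h2 : 0 < 2%:R^-1 :> R by rewrite invr_gt0.
  rewrite h4 in x2; nra.
rewrite powR1 /= mulr1.
have yp' : 0 < y `^ (1 - alpha) by exact: (powR_gt0 _ yp).
rewrite ler_pdivlMr //.
have yv' : y `^ (1 - alpha) <= m%:R `^ ((-1) / 2 * (1 - alpha)).
  rewrite powRrM; apply: ge0_ler_powR; rewrite ?nnegrE ?subr_ge0 //; exact: ltW.
apply: le_trans (_ : 1 / 2 * m%:R `^ (- alpha / 2) * m%:R `^ ((-1) / 2 * (1 - alpha)) <= x).
  apply: ler_wpM2l; last exact: yv'.
  by rewrite mulr_ge0 // powR_ge0.
rewrite -mulrA -powRD; last by rewrite (gt_eqF mp) implybT.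
have -> : - alpha / 2 + (-1) / 2 * (1 - alpha) = (-1) / 2 by ring.
apply: le_trans xv; by rewrite /v mul1r mulrC.
Qed.

Section IP.
Context {R : realType} {V : completeNormedModType R}.
Variable ip : V -> V -> R.
Hypothesis Hip : is_inner_product ip.

Lemma ipC x y : ip x y = ip y x.
Proof. by case: Hip. Qed.
Lemma ipn x : ip x x = `|x| ^+ 2.
Proof. by case: Hip. Qed.
Lemma ipZDl a x y z : ip (a *: x + y) z = a * ip x z + ip y z.
Proof. by case: Hip. Qed.
Lemma ip0l z : ip 0 z = 0.
Proof. have := ipZDl 1 0 0 z. rewrite scale1r addr0 mul1r. lra. Qed.
Lemma ipDl x y z : ip (x + y) z = ip x z + ip y z.
Proof. by rewrite -{1}(scale1r x) ipZDl mul1r. Qed.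
Lemma ipZl a x z : ip (a *: x) z = a * ip x z.
Proof. by rewrite -(addr0 (a *: x)) ipZDl ip0l addr0. Qed.
Lemma ipNl x z : ip (- x) z = - ip x z.
Proof. by rewrite -scaleN1r ipZl mulN1r. Qed.
Lemma ipBl x y z : ip (x - y) z = ip x z - ip y z.
Proof. by rewrite ipDl ipNl. Qed.
Lemma ip0r z : ip z 0 = 0.
Proof. by rewrite ipC ip0l. Qed.
Lemma ipDr x y z : ip z (x + y) = ip z x + ip z y.
Proof. by rewrite ipC ipDl !(ipC z). Qed.
Lemma ipZr a x z : ip z (a *: x) = a * ip z x.
Proof. by rewrite ipC ipZl ipC. Qed.
Lemma ipNr x z : ip z (- x) = - ip z x.
Proof. by rewrite ipC ipNl ipC. Qed.
Lemma ipBr x y z : ip z (x - y) = ip z x - ip z y.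
Proof. by rewrite ipDr ipNr. Qed.

Lemma ip_suml n (c : 'I_n -> R) (g : 'I_n -> V) z :
  ip (\sum_(i < n) c i *: g i) z = \sum_(i < n) c i * ip (g i) z.
Proof.
apply: (big_ind2 (fun v r => ip v z = r)); first exact: ip0l.
  by move=> ? ? ? ? <- <-; rewrite ipDl.
by move=> i _; rewrite ipZl.
Qed.

Lemma ip_le x y : ip x y <= `|x| * `|y|.
Proof.
have h := ipn (x + y). rewrite ipDl !ipDr (ipC y x) !ipn in h.
have t := ler_normD x y.
have : `|x + y| ^+ 2 <= (`|x| + `|y|) ^+ 2.
  by rewrite lerXn2r // ?nnegrE // addr_ge0.
rewrite -h. nra.
Qed.

Lemma ip_abs_le x y : `|ip x y| <= `|x| * `|y|.
Proof.
rewrite ler_norml ip_le andbT.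
have := ip_le x (- y). rewrite ipNr normrN. lra.
Qed.

Lemma closure_ip_le (S : set V) a s x :
  (forall y, S y -> ip a y <= s) -> closure S x -> ip a x <= s.
Proof.
move=> hS hx.
apply/ler_addgt0Pr => e e0.
have he : 0 < e / (`|a| + 1) by rewrite divr_gt0 // ltr_pwDr.
have [y [Sy By]] := hx _ (nbhsx_ballx x _ he).
move: By; rewrite -ball_normE /ball_ /= => By.
have := hS _ Sy.
have : ip a x = ip a y + ip a (x - y) by rewrite ipBr; lra.
have := ip_le a (x - y).
have : `|a| * `|x - y| <= `|a| * (e / (`|a| + 1)).
  by rewrite ler_wpM2l // ltW.
have : `|a| * (e / (`|a| + 1)) <= e.
  rewrite mulrA ler_pdivrMr ?ltr_pwDr //. nra.
lra.
Qed.


Lemma span_add (S : set V) x y c :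
  span_set S x -> S y -> span_set S (x + c *: y).
Proof.
move=> [n [d [g [Sg ->]]]] Sy.
exists n.+1, (fun i => if unlift ord_max i is Some j then d j else c),
  (fun i => if unlift ord_max i is Some j then g j else y); split.
  by move=> i; case: (unlift ord_max i).
rewrite big_ord_recr /= unlift_none; congr (_ + _).
apply: eq_bigr => i _.
have -> : widen_ord (leqnSn n) i = lift ord_max i by apply: val_inj; rewrite /= /bump leqNgt ltn_ord.
by rewrite liftK.
Qed.

Lemma span0 (S : set V) : span_set S 0.
Proof. by exists 0%N, (fun _ => 0), (fun _ => 0); split => [[]//|]; rewrite big_ord0. Qed.

Lemma span_mono (S T : set V) x : (forall y, S y -> T y) -> span_set S x -> span_set T x.
Proof. move=> ST [n [d [g [Sg ->]]]]; exists n, d, g; split => // i; exact: ST. Qed.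

Lemma ip_span_r (S : set V) a s : (forall y, S y -> ip a y = 0) -> span_set S s -> ip a s = 0.
Proof.
move=> h [n [d [g [Sg ->]]]]; rewrite ipC ip_suml big1 // => i _.
by rewrite ipC h // mulr0.
Qed.

Lemma conv_ip_le (D : set V) a s x :
  (forall g, D g -> ip a g <= s) -> conv_hull D x -> ip a x <= s.
Proof.
move=> h [n [c [g [Dg c0 c1 ->]]]]; rewrite ipC ip_suml.
rewrite -[s]mul1r -c1 mulr_suml; apply: ler_sum => i _.
by rewrite ipC ler_wpM2l // h.
Qed.

Lemma A1_ip_le (D : set V) a s x :
  (forall g, D g -> ip a g <= s) -> A1 D x -> ip a x <= s.
Proof. move=> h; apply: closure_ip_le => y; exact: conv_ip_le. Qed.


Lemma seq_bound (a c : nat -> R) (A : R) : 0 <= A -> (forall k, 0 <= a k) ->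
  (forall k, 0 <= c k) -> (forall k, a k.+1 <= a k - c k ^+ 2) ->
  (forall k, a k <= A * c k) -> forall k, k.+1%:R * a k <= A ^+ 2.
Proof.
move=> A0 a0 c0 hs hA.
have step k : A^+2 * a k.+1 <= A^+2 * a k - a k ^+ 2.
  have h1 : a k ^+ 2 <= (A * c k) ^+ 2 by rewrite lerXn2r // ?nnegrE ?mulr_ge0.
  have := hs k; have := a0 k; have := a0 k.+1. rewrite exprMn in h1.
  have : 0 <= A ^+ 2 by rewrite sqr_ge0.
  nra.
elim => [|k IH].
  rewrite mul1r. have := step 0%N; have := a0 0%N; have := a0 1%N.
  have : 0 <= A ^+ 2 by rewrite sqr_ge0. nra.
have := step k; have := a0 k; have := a0 k.+1; have := hs k.
have := sqr_ge0 (c k).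
have : 0 <= k.+1%:R :> R by [].
rewrite -[k.+2]addn1 natrD.
move: IH; set K := k.+1%:R; set B := A ^+ 2; set x := a k; set y := a k.+1.
move=> IH K0 cc hsk y0 x0 st.
have B0 : 0 <= B by rewrite sqr_ge0.
have [B00|Bp] := eqVneq B 0.
  rewrite B00 in IH st *.
  have K1 : 1 <= K by rewrite /K ler1n.
  have x00 : x = 0 by nra.
  rewrite x00 in hsk; nra.
have Bp' : 0 < B by rewrite lt_def Bp B0.
have id : 0 <= (B - K * x) * (B - x) + x ^+ 2.
  apply: addr_ge0; last exact: sqr_ge0.
  apply: mulr_ge0; nra.
have : B * ((K + 1) * y) <= B * B by nra.
by rewrite ler_pM2l.
Qed.

Local Open Scope classical_set_scope.
Local Open Scope ring_scope.

Lemma upper (D : set V) f gs G (m : nat) alpha :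
  dictionary D -> f != 0 -> (A1norm D f < +oo)%E -> OGA_realization ip D f gs G ->
  (1 <= m)%N -> 0 < alpha <= 1 ->
  `|f - G m| / (`|f| `^ (1 - alpha) * (fine (A1norm D f)) `^ alpha)
    <= m%:R `^ (- alpha / 2).
Proof.
case=> Dunit _ Dsym f0 Afin HO m1 ha.
pose Sk k := [set gs i | i in [set i : nat | (i < k)%N]].
have orth k s : span_set (Sk k) s -> ip (f - G k) s = 0.
  by case: (HO k) => -[_ h] _ _; apply: h.
have Gin k : span_set (Sk k) (G k) by case: (HO k) => -[].
have Dg k : D (gs k) by case: (HO k).
have gmax k g : D g -> ip (f - G k) g <= ip (f - G k) (gs k).
  by case: (HO k) => _ _; apply.
pose c k := ip (f - G k) (gs k).
have c0 k : 0 <= c k.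
  have := gmax k _ (Dsym _ (Dg k)); rewrite ipNr /c; lra.
have F2 k : ip (f - G k) f = `|f - G k| ^+ 2.
  have e : f = (f - G k) + G k by rewrite subrK.
  by rewrite {2}e ipDr ipn (orth _ _ (Gin k)) addr0.
have F4 k M : 0 < M -> A1 D (M^-1 *: f) -> `|f - G k| ^+ 2 <= M * c k.
  move=> Mp hA; have := @A1_ip_le D (f - G k) (c k) _ (gmax k) hA.
  by rewrite ipZr F2 mulrC ler_pdivrMr // mulrC.
have F5 k : `|f - G k.+1| ^+ 2 <= `|f - G k| ^+ 2 - c k ^+ 2.
  pose s := G k + c k *: gs k.
  have Ss : span_set (Sk k.+1) s.
    apply: span_add; last by exists k => /=.
    apply: span_mono (Gin k) => y [i ik <-]; exists i => //=.
    exact: ltnW.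
  have o1 := orth k.+1 _ Ss; have o2 := orth k.+1 _ (Gin k.+1).
  have e1 : `|f - s| ^+ 2 = `|f - G k.+1| ^+ 2 + `|G k.+1 - s| ^+ 2.
    rewrite -!ipn.
    have -> : f - s = (f - G k.+1) + (G k.+1 - s) by rewrite addrA subrK.
    have o3 : ip (f - G k.+1) (G k.+1 - s) = 0 by rewrite ipBr o1 o2 subr0.
    have o4 : ip (G k.+1 - s) (f - G k.+1) = 0 by rewrite ipC.
    move: o3 o4; set a := f - G k.+1; set b := G k.+1 - s => o3 o4.
    clearbody a b; rewrite ipDl !ipDr o3 o4; lra.
  have e2 : `|f - s| ^+ 2 = `|f - G k| ^+ 2 - c k ^+ 2.
    have -> : f - s = (f - G k) - c k *: gs k by rewrite /s opprD addrA.
    rewrite /c -!ipn; have hg := Dunit _ (Dg k).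
    move: hg; set a := f - G k; set g := gs k; clearbody a g => hg.
    rewrite ipBl !ipBr ipZl !ipZr (ipC g a) ipZl (ipn g) hg; ring.
  rewrite -e2 e1 lerDl; exact: sqr_ge0.
have [M0 [M0p M0A]] : exists M, 0 < M /\ A1 D (M^-1 *: f).
  case: (pselect (exists M, 0 < M /\ A1 D (M^-1 *: f))) => // nM.
  move: Afin; rewrite /A1norm.
  have -> : [set M%:E | M in [set M : R | 0 < M /\ A1 D (M^-1 *: f)]] = set0.
    apply/seteqP; split => // x [M hM _]; apply: nM; exists M; exact: hM.
  by rewrite ereal_inf0.
have Age0 : (0 <= A1norm D f)%E.
  rewrite /A1norm; apply: le_ereal_inf_tmp => _ [M [Mp _] <-].
  by rewrite lee_fin ltW.
have Afn : A1norm D f \is a fin_num by rewrite ge0_fin_numE.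
have A0 : 0 <= fine (A1norm D f) by apply: fine_ge0.
have hA k : `|f - G k| ^+ 2 <= fine (A1norm D f) * c k.
  have [ck0|ckp] := eqVneq (c k) 0.
    by have := F4 k _ M0p M0A; rewrite ck0 !mulr0.
  have ckp' : 0 < c k by rewrite lt_def ckp c0.
  rewrite -ler_pdivrMr //.
  rewrite -lee_fin fineK //. rewrite /A1norm; apply: le_ereal_inf_tmp => _ [M [Mp MA] <-].
  by rewrite lee_fin ler_pdivrMr // F4.
have sb := @seq_bound (fun k => `|f - G k| ^+ 2) c _ A0 (fun k => sqr_ge0 _) c0 F5 hA m.
have G0 : G 0%N = 0.
  case: (Gin 0%N) => n [d [g [Sg ->]]].
  case: n d g Sg => [|n] d g Sg; first by rewrite big_ord0.
  by case: (Sg ord0) => i.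
have mono k : `|f - G k| ^+ 2 <= `|f| ^+ 2.
  elim: k => [|k IH]; first by rewrite G0 subr0.
  apply: le_trans IH; apply: le_trans (F5 k) _.
  rewrite lerBlDr lerDl; exact: sqr_ge0.
apply: final_ineq => //.
- by rewrite normr_gt0.
- apply: le_trans sb; apply: ler_wpM2r; first exact: sqr_ge0.
  by rewrite ler_nat.
Qed.

Lemma sum_delta n (d : nat -> R) j : (j < n)%N ->
  \sum_(i < n) d i * ((i : nat) == j)%:R = d j.
Proof.
move=> hj; rewrite (bigD1 (Ordinal hj)) //= eqxx mulr1 big1 ?addr0 // => i hi.
have -> : ((i : nat) == j) = false.
  apply/negbTE; move: hi; apply: contra => /eqP h; apply/eqP/val_inj.
  exact: h.
by rewrite mulr0.
Qed.

Definition orthon n (e : nat -> V) :=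
  forall i j, (i < n)%N -> (j < n)%N -> ip (e i) (e j) = (i == j)%:R.

Lemma proj_coef n e x j : orthon n e -> (j < n)%N ->
  ip (\sum_(i < n) ip x (e i) *: e i) (e j) = ip x (e j).
Proof.
move=> he hj; rewrite ip_suml.
rewrite (eq_bigr (fun i : 'I_n => ip x (e i) * ((i : nat) == j)%:R)).
  exact: (@sum_delta n (fun i => ip x (e i)) j hj).
by move=> i _; rewrite he.
Qed.

Lemma proj_perp n e x j : orthon n e -> (j < n)%N ->
  ip (x - \sum_(i < n) ip x (e i) *: e i) (e j) = 0.
Proof. by move=> he hj; rewrite ipBl proj_coef // subrr. Qed.

Lemma normalize_unit (r : V) : r != 0 -> `| (`|r|^-1 *: r) | = 1.
Proof.
move=> r0; rewrite normrZ normfV normr_id mulVf //.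
by rewrite normr_eq0.
Qed.

Lemma gram (n : nat) : @infinite_dim R V -> exists e : nat -> V, orthon n e.
Proof.
move=> Hinf; elim: n => [|n [e he]]; first by exists (fun _ => 0).
have [x hx] := Hinf n (fun i : 'I_n => e i).
pose r := x - \sum_(i < n) ip x (e i) *: e i.
have r0 : r != 0.
  apply/eqP => r0; apply: hx.
  exists n, (fun i => ip x (e i)), (fun i => e i); split; first by move=> i; exists i.
  by move/eqP: r0; rewrite subr_eq0 => /eqP.
pose u := `|r|^-1 *: r.
have uu : ip u u = 1 by rewrite ipn normalize_unit // expr1n.
have ue j : (j < n)%N -> ip u (e j) = 0.
  by move=> hj; rewrite ipZl proj_perp // mulr0.
exists (fun i => if i == n then u else e i) => i j; rewrite !ltnS => hi hj.
have [ein|ni] := eqVneq i n; have [ejn|nj] := eqVneq j n.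
- by subst; rewrite eqxx.
- subst i; have hj' : (j < n)%N by rewrite ltn_neqAle nj.
  by rewrite ue // eq_sym (negbTE nj).
- subst j; have hi' : (i < n)%N by rewrite ltn_neqAle ni.
  by rewrite ipC ue // (negbTE ni).
- have hi' : (i < n)%N by rewrite ltn_neqAle ni.
  have hj' : (j < n)%N by rewrite ltn_neqAle nj.
  exact: he.
Qed.

Lemma sum_if_ge (d : R) k n :
  \sum_(i < n) (if (k <= i)%N then d else 0) = (n - k)%:R * d.
Proof.
elim: n => [|n IH]; first by rewrite big_ord0 sub0n mul0r.
rewrite big_ord_recr /= IH.
case: (leqP k n) => hk.
  by rewrite subSn // -addn1 natrD mulrDl mul1r.
have -> : (n.+1 - k = 0)%N by apply/eqP; rewrite subn_eq0.
have -> : (n - k = 0)%N by apply/eqP; rewrite subn_eq0 ltnW.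
by rewrite mul0r addr0.
Qed.

Section Example.
Variables (N : nat) (e : nat -> V).
Hypothesis he : orthon N e.
Hypothesis N0 : (0 < N)%N.

Definition cc k i : R := if (k <= i)%N then N%:R^-1 else 0.
Definition res k : V := \sum_(i < N) cc k i *: e i.
Definition idx k : nat := if (k < N)%N then k else 0%N.
Definition gsx k : V := e (idx k).
Definition Dex : set V := fun g =>
  (exists2 i, (i < N)%N & (g = e i \/ g = - e i)) \/
  (`|g| = 1 /\ forall i, (i < N)%N -> ip g (e i) = 0).
Definition Gex k : V := res 0 - res k.

Lemma idx_lt k : (idx k < N)%N.
Proof. by rewrite /idx; case: ifP. Qed.

Lemma res_e k j : (j < N)%N -> ip (res k) (e j) = cc k j.
Proof.
move=> hj; rewrite /res ip_suml.
rewrite (eq_bigr (fun i : 'I_N => cc k i * ((i : nat) == j)%:R)).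
  exact: (@sum_delta N (cc k) j hj).
by move=> i _; rewrite he.
Qed.

Lemma res_perp k g : (forall i, (i < N)%N -> ip g (e i) = 0) -> ip (res k) g = 0.
Proof.
move=> h; rewrite /res ip_suml big1 // => i _.
by rewrite ipC h // mulr0.
Qed.

Lemma Ninv_gt0 : 0 < N%:R^-1 :> R.
Proof. by rewrite invr_gt0 ltr0n. Qed.

Lemma cc_ge0 k i : 0 <= cc k i.
Proof. rewrite /cc; case: ifP => _ //; exact: ltW Ninv_gt0. Qed.

Lemma cc_max k j : (j < N)%N -> cc k j <= cc k (idx k).
Proof.
move=> hj; rewrite /cc /idx; case: (ltnP k N) => hk.
  by rewrite leqnn; case: ifP => _ //; exact: ltW Ninv_gt0.
have -> : (k <= j)%N = false by apply/negbTE; rewrite -ltnNge; apply: leq_trans hk.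
by case: ifP.
Qed.

Lemma e_unit j : (j < N)%N -> `|e j| = 1.
Proof.
move=> hj; have := he j j hj hj; rewrite eqxx ipn -(expr1n _ 2) => /eqP.
by rewrite eqrXn2 // expr1n => /eqP.
Qed.

Lemma res_norm2 k : `|res k| ^+ 2 = \sum_(i < N) cc k i ^+ 2.
Proof.
rewrite -ipn {1}/res ip_suml; apply: eq_bigr => i _.
by rewrite ipC res_e // expr2.
Qed.

Lemma res_norm2_val k : (k <= N)%N -> `|res k| ^+ 2 = (N - k)%:R * N%:R^-1 ^+ 2.
Proof.
move=> hk; rewrite res_norm2 -sum_if_ge; apply: eq_bigr => i _.
by rewrite /cc; case: ifP => _; rewrite ?expr0n.
Qed.


Lemma Dex_e j : (j < N)%N -> Dex (e j).
Proof. by move=> hj; left; exists j => //; left. Qed.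

Lemma Dex_dict : dictionary Dex.
Proof.
split.
- move=> g [[i hi [->|->]]|[]] //; rewrite ?normrN; exact: e_unit.
- apply/seteqP; split => // x _; apply: subset_closure.
  pose b := \sum_(i < N) ip x (e i) *: e i.
  pose r := x - b.
  have bS : span_set Dex b.
    exists N, (fun i => ip x (e i)), (fun i => e i); split => // i.
    exact: Dex_e.
  have rp j : (j < N)%N -> ip r (e j) = 0 by move=> hj; exact: proj_perp.
  have [r0|r0] := eqVneq r 0.
    have -> : x = b + 0 *: e 0%N by rewrite scale0r addr0; apply/eqP; rewrite -subr_eq0 -/r r0.
    by apply: span_add => //; exact: Dex_e.
  have -> : x = b + `|r| *: (`|r|^-1 *: r).
    by rewrite scalerA mulfV ?normr_eq0 // scale1r /r addrC subrK.
  apply: span_add => //; right; split; first exact: normalize_unit.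
  by move=> i hi; rewrite ipZl rp // mulr0.
- move=> g [[i hi [->|->]]|[h1 h2]].
  + by left; exists i => //; right.
  + by left; exists i => //; left; rewrite opprK.
  + right; split; first by rewrite normrN.
    by move=> i hi; rewrite ipNl h2 // oppr0.
Qed.

Lemma res_step k : res k = res k.+1 + (if (k < N)%N then N%:R^-1 else 0) *: gsx k.
Proof.
case: (ltnP k N) => hk.
  rewrite /res (bigD1 (Ordinal hk)) //= [X in _ = X + _](bigD1 (Ordinal hk)) //=.
  rewrite /gsx /idx hk /cc leqnn ltnn scale0r add0r addrC; congr (_ + _).
  apply: eq_bigr => i hi.
  have ik : (i : nat) != k by move: hi; apply: contra => /eqP h; apply/eqP/val_inj.
  by rewrite (leq_eqVlt k i) eq_sym (negbTE ik).
rewrite scale0r addr0 /res; apply: eq_bigr => i _.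
have h1 : (k <= i)%N = false by apply/negbTE; rewrite -ltnNge; apply: leq_trans hk.
have h2 : (k.+1 <= i)%N = false by apply/negbTE; rewrite -ltnNge ltnS; exact: ltnW (leq_trans (ltn_ord i) hk).
by rewrite /cc h1 h2.
Qed.

Lemma Gex_OGA : OGA_realization ip Dex (res 0) gsx Gex.
Proof.
have fG k : res 0 - Gex k = res k by rewrite /Gex opprB addrC subrK.
move=> k; split.
- split.
    elim: k => [|k IH]; first by rewrite /Gex subrr; exact: span0.
    have -> : Gex k.+1 = Gex k + (if (k < N)%N then N%:R^-1 else 0) *: gsx k.
      by rewrite /Gex (res_step k) opprD addrA subrK.
    apply: span_add; last by exists k => /=.
    apply: span_mono IH => y [i ik <-]; exists i => //=; exact: ltnW.
  move=> s; rewrite fG; apply: ip_span_r => y [i ik <-].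
  rewrite /gsx res_e ?idx_lt // /cc.
  have -> : (k <= idx i)%N = false.
    apply/negbTE; rewrite -ltnNge; apply: leq_ltn_trans ik.
    by rewrite /idx; case: ifP.
  by [].
- exact/Dex_e/idx_lt.
- move=> g; rewrite fG /gsx res_e ?idx_lt //.
  move=> [[i hi [->|->]]|[h1 h2]].
  + by rewrite res_e //; exact: cc_max.
  + rewrite ipNr res_e //; apply: le_trans (cc_ge0 _ _); rewrite oppr_le0; exact: cc_ge0.
  + by rewrite res_perp //; exact: cc_ge0.
Qed.


Lemma Dex_bound g : Dex g -> ip (res 0) g <= N%:R^-1.
Proof.
move=> [[i hi [->|->]]|[h1 h2]].
+ by rewrite res_e // /cc leq0n.
+ rewrite ipNr res_e // /cc leq0n; apply: le_trans (ltW Ninv_gt0).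
  by rewrite oppr_le0; exact: ltW Ninv_gt0.
+ by rewrite res_perp //; exact: ltW Ninv_gt0.
Qed.

Lemma A1norm_ex : A1norm Dex (res 0) = 1%:E.
Proof.
apply/eqP; rewrite eq_le; apply/andP; split.
- rewrite /A1norm; apply: ereal_inf_lbound; exists 1 => //; split; first exact: ltr01.
  rewrite invr1 scale1r; apply: subset_closure.
  exists N, (fun _ => N%:R^-1), e; split.
  + move=> i; exact: Dex_e.
  + move=> i; exact: ltW Ninv_gt0.
  + by rewrite sumr_const card_ord -(mulr_natr (N%:R^-1)) mulVf ?gt_eqF ?ltr0n.
  + by rewrite /res; apply: eq_bigr => i _; rewrite /cc leq0n.
- rewrite /A1norm; apply: le_ereal_inf_tmp => _ [M [Mp MA] <-]; rewrite lee_fin.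
  have := @A1_ip_le Dex (res 0) (N%:R^-1) _ Dex_bound MA.
  rewrite ipZr ipn res_norm2_val ?leq0n // subn0.
  have -> : N%:R * N%:R^-1 ^+ 2 = N%:R^-1 :> R.
    by rewrite expr2 mulrA mulfV ?mul1r ?gt_eqF ?ltr0n.
  have Ni := Ninv_gt0.
  have Mi : M^-1 * M = 1 by rewrite mulVf // gt_eqF.
  have Mi0 : 0 < M^-1 by rewrite invr_gt0.
  nra.
Qed.

End Example.

End IP.

Theorem mainTheorem4 (R : realType) (V : completeNormedModType R)
  (ip : V -> V -> R) (Hip : is_inner_product ip) (Hinf : @infinite_dim R V)
  (m : nat) (alpha : R) :
  (1 <= m)%N -> 0 < alpha <= 1 ->
  (((1 / 2) * (m%:R `^ (- alpha / 2)))%:E <= gamma_o ip m alpha)%E /\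
  (gamma_o ip m alpha <= (m%:R `^ (- alpha / 2))%:E)%E.
Proof.
move=> m1 ha; split; last first.
  apply: ge_ereal_sup => _ [r [D [f [gs [G [hD f0 Af HO ->]]]]] <-].
  rewrite lee_fin; exact: (@upper R V ip Hip _ _ _ _ _ _ hD f0 Af HO m1 ha).
have [e he] := gram ip Hip (2 * m) Hinf.
have N0 : (0 < 2 * m)%N by rewrite muln_gt0.
have mp : 0 < m%:R :> R by rewrite ltr0n.
have fG : res (2 * m) e 0 - Gex (2 * m) e m = res (2 * m) e m.
  by rewrite /Gex opprB addrC subrK.
have n0 : `|res (2 * m) e 0| ^+ 2 = (2 * m%:R)^-1.
  rewrite (res_norm2_val ip Hip _ _ he) // subn0 natrM.
  by field; rewrite (gt_eqF mp).
have nm : `|res (2 * m) e m| ^+ 2 = (4 * m%:R)^-1.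
  rewrite (res_norm2_val ip Hip _ _ he); last by rewrite leq_pmull.
  have -> : (2 * m - m = m)%N by rewrite mul2n -addnn addnK.
  rewrite natrM.
  by field; rewrite (gt_eqF mp).
apply: le_trans (ereal_sup_ubound _); last first.
  exists (`|res (2 * m) e 0 - Gex (2 * m) e m| /
     (`|res (2 * m) e 0| `^ (1 - alpha) *
      fine (A1norm (Dex ip (2 * m) e) (res (2 * m) e 0)) `^ alpha)) => //.
  exists (Dex ip (2 * m) e), (res (2 * m) e 0), (gsx (2 * m) e), (Gex (2 * m) e).
  split => //.
  - exact: (Dex_dict ip Hip _ _ he).
  - apply/eqP => r0; move: n0; rewrite r0 normr0 expr0n /= => /eqP.
    by rewrite eq_sym invr_eq0 mulf_eq0 (gt_eqF mp) orbF pnatr_eq0.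
  - by rewrite (A1norm_ex ip Hip _ _ he N0) ltry.
  - exact: (Gex_OGA ip Hip _ _ he N0).
rewrite lee_fin (A1norm_ex ip Hip _ _ he N0) /= fG.
apply: lower_ineq => //.
Qed.
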